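(* In a pairing heap with $n$ elements, decrease-key takes $O(\log n)$ amortized time with respect to the potential $\Phi$.
   Context: A pairing heap is a heap-ordered rooted ordered tree (the ''general view''): each node stores a key, has zero or more children ordered from left to right, and every child has a strictly larger key than its parent. It is stored in the ''binary view'' via the leftmost-child/right-sibling correspondence: the left child of $x$ in the binary view is the leftmost child of $x$ in the general view, and the right child of $x$ in the binary view is the next sibling to the right of $x$ in the general view. Pairing two heap-ordered trees makes the root with the larger key the leftmost child of the other root. Operations: make-heap returns an empty heap; get-min returns the root key; insert creates a new node, which becomes the root if the heap is empty and otherwise is paired with the root; decrease-key$(p,y)$ (with $y$ strictly less than the current key of the node $p$) sets the key to $y$ and, if the node is not the root, detaches it (with its general-view subtree) from its parent and pairs it with the root; delete-min removes the root, then (first pass) pairs the root's former children in consecutive pairs from left to right, then (second pass) repeatedly pairs the two rightmost remaining trees until one tree remains. The actual cost of an operation is $1$ plus the number of pairings it performs, and its amortized cost is its actual cost plus the resulting change in $\Phi$. The heap is assumed to arise from a sequence of such operations starting from an empty heap. Sticky size: $N$ is initially $1$; after every heap operation, if $n \ge 2N$ then $N$ is doubled, and if $n \le N/2$ then $N$ is halved, where $n$ is the current number of elements. Let $\lg = \log_2$. For a node $x$, $|x|$ is the number of nodes in the subtree rooted at $x$ in the binary view, and $x_L$, $x_R$ are its left and right children in the binary view (a missing child has size $0$). Node potential $\phi_x$: if $|x_L| > \lg N$ and $|x_R| > \lg N$, $x$ is large and $\phi_x = 400 + 100\lg|x|$; if $|x_L| \le \lg N < |x_R|$, $x$ is mixed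 and $\phi_x = 400 + 100\frac{|x_L|}{\lg N}\lg|x|$ (symmetrically, if $|x_R| \le \lg N < |x_L|$, $\phi_x = 400 + 100\frac{|x_R|}{\lg N}\lg|x|$); if both $|x_L|,|x_R| \le \lg N$, $x$ is small and $\phi_x = 0$. Edge potential: an edge of the binary view joining a large node to its right child that is also large has potential $-7$; all other edges have potential $0$. $\Phi = 900|N-n| + \sum_x \phi_x + (\text{sum of edge potentials})$. *)

(* Defs.v *)
From Stdlib Require Import Reals List.
Import ListNotations.
Open Scope R_scope.

(** Pairing heaps, stored in the binary view (leftmost-child / right-sibling).
    [Node k l r]: key [k], left child [l] (leftmost child in the general view),
    right child [r] (next sibling in the general view). *)
Inductive bt : Type :=
| Leaf : bt
| Node : R -> bt -> bt -> bt.

Fixpoint size (t : bt) : nat :=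
  match t with
  | Leaf => 0%nat
  | Node _ l r => S (size l + size r)
  end.

Definition lg (x : R) : R := ln x / ln 2.

(** A node reference: the path from the root in the binary view
    ([false] = go to left child, [true] = go to right child). *)
Fixpoint get (t : bt) (p : list bool) : bt :=
  match p, t with
  | [], _ => t
  | b :: p', Node _ l r => get (if b then r else l) p'
  | _ :: _, Leaf => Leaf
  end.

Fixpoint replace (t : bt) (p : list bool) (s : bt) : bt :=
  match p, t with
  | [], _ => s
  | false :: p', Node k l r => Node k (replace l p' s) r
  | true :: p', Node k l r => Node k l (replace r p' s)
  | _ :: _, Leaf => Leaf
  end.

(** Pairing of two heap-ordered trees (their binary-view right children are
    ignored / assumed empty): the root with the larger key becomes the leftmost
    child of the other. *)
Definition link (t1 t2 : bt) : bt :=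
  match t1, t2 with
  | Leaf, _ => t2
  | _, Leaf => t1
  | Node a la _, Node b lb _ =>
      if Rlt_dec b a then Node b (Node a la lb) Leaf
      else Node a (Node b lb la) Leaf
  end.

(** The list of general-view trees hanging on the right spine of a binary tree
    (i.e. a node's children list when applied to its left child). *)
Fixpoint spine (t : bt) : list bt :=
  match t with
  | Leaf => []
  | Node k l r => Node k l Leaf :: spine r
  end.

Fixpoint pass1 (ts : list bt) : list bt :=
  match ts with
  | a :: b :: rest => link a b :: pass1 rest
  | _ => ts
  end.

Fixpoint pass2 (ts : list bt) : bt :=
  match ts with
  | [] => Leaf
  | [t] => t
  | t :: rest => link t (pass2 rest)
  end.

(** Heap operations (results only; the heap is the binary view of its root). *)
Definition insert (h : bt) (x : R) : bt :=
  match h with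
  | Leaf => Node x Leaf Leaf
  | _ => link h (Node x Leaf Leaf)
  end.

Definition delete_min (h : bt) : bt :=
  match h with
  | Leaf => Leaf
  | Node _ l _ => pass2 (pass1 (spine l))
  end.

(** decrease-key(p, y): result heap and actual cost (1 + number of pairings). *)
Definition decrease_key (h : bt) (p : list bool) (y : R) : bt * nat :=
  match p with
  | [] =>
      match h with
      | Node _ l r => (Node y l r, 1%nat)
      | Leaf => (Leaf, 1%nat)
      end
  | _ :: _ =>
      match get h p with
      | Node _ l r => (link (replace h p r) (Node y l Leaf), 2%nat)
      | Leaf => (h, 1%nat)
      end
  end.

Definition updN (n : nat) (N : R) : R :=
  if Rle_dec (2 * N) (INR n) then 2 * N
  else if Rle_dec (INR n) (N / 2) then N / 2
  else N.

Definition phi (N : R) (l r : bt) : R :=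
  let sl := INR (size l) in
  let sr := INR (size r) in
  let s := INR (S (size l + size r)) in
  let L := lg N in
  if Rlt_dec L sl then
    if Rlt_dec L sr then 400 + 100 * lg s
    else 400 + 100 * (sr / L) * lg s
  else
    if Rlt_dec L sr then 400 + 100 * (sl / L) * lg s
    else 0.

Definition is_large (N : R) (l r : bt) : bool :=
  if Rlt_dec (lg N) (INR (size l)) then
    if Rlt_dec (lg N) (INR (size r)) then true else false
  else false.

Definition edge_pot (N : R) (l r : bt) : R :=
  match r with
  | Node _ rl rr => if andb (is_large N l r) (is_large N rl rr) then -7 else 0
  | Leaf => 0
  end.

Fixpoint tree_pot (N : R) (t : bt) : R :=
  match t with
  | Leaf => 0
  | Node _ l r => phi N l r + edge_pot N l r + tree_pot N l + tree_pot N r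
  end.

Definition Phi (h : bt) (N : R) : R :=
  900 * Rabs (N - INR (size h)) + tree_pot N h.

Inductive step : bt * R -> bt * R -> Prop :=
| step_insert : forall h N x,
    step (h, N) (insert h x, updN (size (insert h x)) N)
| step_get_min : forall h N,
    h <> Leaf -> step (h, N) (h, updN (size h) N)
| step_delete_min : forall h N,
    h <> Leaf -> step (h, N) (delete_min h, updN (size (delete_min h)) N)
| step_decrease_key : forall h N p k l r y,
    get h p = Node k l r -> y < k ->
    step (h, N) (fst (decrease_key h p y),
                 updN (size (fst (decrease_key h p y))) N).

Inductive reachable : bt * R -> Prop :=
| reach_init : reachable (Leaf, 1)
| reach_step : forall s s', reachable s -> step s s' -> reachable s'.

Definition dk_amortized (h : bt) (N : R) (p : list bool) (y : R) : R :=
  let res := decrease_key h p y in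
  let h' := fst res in
  let N' := updN (size h') N in
  INR (snd res) + (Phi h' N' - Phi h N).

(* Main.v *)
Require Import Defs.
From Stdlib Require Import Reals List Lra Lia Bool.
Import ListNotations.
Open Scope R_scope.

Lemma ln2_pos : 0 < ln 2.
Proof. pose proof ln_lt_2; lra. Qed.

Lemma lg_le : forall x y, 0 < x -> x <= y -> lg x <= lg y.
Proof.
  intros x y Hx Hxy. unfold lg. pose proof ln2_pos.
  apply Rmult_le_compat_r. left; apply Rinv_0_lt_compat; lra.
  destruct Hxy as [H1|H1]. left; apply ln_increasing; lra. subst; lra.
Qed.

Lemma lg_lt : forall x y, 0 < x -> x < y -> lg x < lg y.
Proof.
  intros x y Hx Hxy. unfold lg. pose proof ln2_pos.
  apply Rmult_lt_compat_r. apply Rinv_0_lt_compat; lra.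
  apply ln_increasing; lra.
Qed.

Lemma lg_1 : lg 1 = 0.
Proof. unfold lg. rewrite ln_1. lra. Qed.

Lemma lg_nonneg : forall x, 1 <= x -> 0 <= lg x.
Proof. intros. rewrite <- lg_1. apply lg_le; lra. Qed.

Lemma lg_2x : forall x, 0 < x -> lg (2 * x) = 1 + lg x.
Proof.
  intros. unfold lg. rewrite ln_mult by lra. pose proof ln2_pos.
  field. lra.
Qed.

Lemma INR_S_ge1 : forall n, 1 <= INR (S n).
Proof. intros. rewrite S_INR. pose proof (pos_INR n). lra. Qed.

Lemma phi_nonneg : forall N l r, 0 <= phi N l r.
Proof.
  intros N l r. unfold phi.
  pose proof (pos_INR (size l)). pose proof (pos_INR (size r)).
  pose proof (lg_nonneg _ (INR_S_ge1 (size l + size r))).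
  set (s := lg (INR (S (size l + size r)))) in *.
  destruct (Rlt_dec (lg N) (INR (size l))); destruct (Rlt_dec (lg N) (INR (size r))).
  - nra.
  - assert (0 <= INR (size r) / lg N).
    { destruct (Req_dec (lg N) 0) as [E|E].
      - rewrite E. assert (INR (size r) = 0) by lra. rewrite H2. unfold Rdiv; lra.
      - apply Rmult_le_pos; [lra| left; apply Rinv_0_lt_compat; lra]. }
    nra.
  - assert (0 <= INR (size l) / lg N).
    { destruct (Req_dec (lg N) 0) as [E|E].
      - rewrite E. assert (INR (size l) = 0) by lra. rewrite H2. unfold Rdiv; lra.
      - apply Rmult_le_pos; [lra| left; apply Rinv_0_lt_compat; lra]. }
    nra.
  - lra.
Qed.

Lemma ratio_bounds : forall a L, 0 <= a -> a <= L -> 0 <= a / L <= 1.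
Proof.
  intros a L Ha HL. destruct (Req_dec L 0) as [E|E].
  - subst. assert (a = 0) by lra. subst. unfold Rdiv; lra.
  - split. apply Rmult_le_pos; [lra| left; apply Rinv_0_lt_compat; lra].
    apply (Rmult_le_reg_r L). lra. unfold Rdiv. rewrite Rmult_assoc, Rinv_l by lra. lra.
Qed.

Lemma ratio_mono : forall a b L, 0 <= a -> a <= b -> b <= L -> a / L <= b / L.
Proof.
  intros a b L Ha Hab HL. destruct (Req_dec L 0) as [E|E].
  - subst. assert (a = 0) by lra. assert (b = 0) by lra. subst. lra.
  - unfold Rdiv. apply Rmult_le_compat_r. left; apply Rinv_0_lt_compat; lra. lra.
Qed.

Lemma phi_upper : forall N l r, phi N l r <= 400 + 100 * lg (INR (S (size l + size r))).
Proof.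
  intros N l r. unfold phi.
  pose proof (pos_INR (size l)). pose proof (pos_INR (size r)).
  pose proof (lg_nonneg _ (INR_S_ge1 (size l + size r))).
  set (s := lg (INR (S (size l + size r)))) in *.
  destruct (Rlt_dec (lg N) (INR (size l))); destruct (Rlt_dec (lg N) (INR (size r))).
  - lra.
  - pose proof (ratio_bounds (INR (size r)) (lg N) H0 ltac:(lra)). nra.
  - pose proof (ratio_bounds (INR (size l)) (lg N) H ltac:(lra)). nra.
  - lra.
Qed.

Lemma phi_large_ge : forall N l r, is_large N l r = true -> 400 <= phi N l r.
Proof.
  intros N l r H. unfold is_large, phi in *.
  pose proof (lg_nonneg _ (INR_S_ge1 (size l + size r))).
  destruct (Rlt_dec (lg N) (INR (size l))); destruct (Rlt_dec (lg N) (INR (size r))); try discriminate.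
  lra.
Qed.

Lemma phi_mono : forall N l r l' r', (size l' <= size l)%nat -> (size r' <= size r)%nat ->
  phi N l' r' <= phi N l r.
Proof.
  intros N l r l' r' H1 H2.
  pose proof (phi_nonneg N l r).
  unfold phi in *.
  apply le_INR in H1. apply le_INR in H2.
  pose proof (pos_INR (size l')). pose proof (pos_INR (size r')).
  assert (Hs : lg (INR (S (size l' + size r'))) <= lg (INR (S (size l + size r)))).
  { apply lg_le. pose proof (INR_S_ge1 (size l' + size r')); lra.
    rewrite !S_INR, !plus_INR. lra. }
  pose proof (lg_nonneg _ (INR_S_ge1 (size l' + size r'))).
  set (s := lg (INR (S (size l + size r)))) in *.
  set (s' := lg (INR (S (size l' + size r')))) in *.
  destruct (Rlt_dec (lg N) (INR (size l'))); destruct (Rlt_dec (lg N) (INR (size r')));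
  destruct (Rlt_dec (lg N) (INR (size l))); destruct (Rlt_dec (lg N) (INR (size r))); try lra.
  - pose proof (ratio_bounds (INR (size r')) (lg N) H3 ltac:(lra)). nra.
  - pose proof (ratio_bounds (INR (size r')) (lg N) H3 ltac:(lra)).
    pose proof (ratio_mono (INR (size r')) (INR (size r)) (lg N) H3 H2 ltac:(lra)). nra.
  - pose proof (ratio_bounds (INR (size l')) (lg N) H0 ltac:(lra)). nra.
  - pose proof (ratio_bounds (INR (size l')) (lg N) H0 ltac:(lra)).
    pose proof (ratio_mono (INR (size l')) (INR (size l)) (lg N) H0 H1 ltac:(lra)). nra.
Qed.

Definition single (t : bt) : Prop := exists k l, t = Node k l Leaf.
Definition rootok (t : bt) : Prop := t = Leaf \/ single t.

Fixpoint sumsize (ts : list bt) : nat :=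
  match ts with [] => 0%nat | t :: ts' => (size t + sumsize ts')%nat end.

Lemma link_single : forall a b, single a -> single b ->
  single (link a b) /\ size (link a b) = (size a + size b)%nat.
Proof.
  intros a b [ka [la Ha]] [kb [lb Hb]]; subst. simpl.
  destruct (Rlt_dec kb ka); simpl; split; try (eexists; eexists; reflexivity); lia.
Qed.

Lemma spine_single : forall t, Forall single (spine t) /\ sumsize (spine t) = size t.
Proof.
  induction t as [|k l IHl r IHr]; simpl. split; auto.
  destruct IHr as [H1 H2]. split. constructor; auto. exists k, l; auto. simpl; lia.
Qed.

Lemma pass1_single : forall ts, Forall single ts ->
  Forall single (pass1 ts) /\ sumsize (pass1 ts) = sumsize ts.
Proof.
  fix IH 1. intros ts H. destruct ts as [|a [|b rest]]; simpl; auto.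
  inversion H as [|? ? Ha Hr]; subst. inversion Hr as [|? ? Hb Hrest]; subst.
  destruct (link_single a b Ha Hb) as [S1 S2].
  destruct (IH rest Hrest) as [T1 T2]. split. constructor; auto. simpl. lia.
Qed.

Lemma pass2_single : forall ts, Forall single ts ->
  rootok (pass2 ts) /\ size (pass2 ts) = sumsize ts.
Proof.
  induction ts as [|a rest IH]; intros H. simpl. split. left; auto. auto.
  inversion H as [|? ? Ha Hrest]; subst. destruct rest as [|b rest'].
  - simpl. split. right; auto. lia.
  - change (pass2 (a :: b :: rest')) with (link a (pass2 (b :: rest'))).
    destruct (IH Hrest) as [R1 R2].
    destruct R1 as [E|S].
    + (* pass2 of nonempty list is not Leaf *)
      exfalso. inversion Hrest as [|? ? Hb0 ?]; subst. clear -E Hb0.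
      revert b E Hb0. induction rest' as [|c rest'' IH2]; intros b E Hb.
      * destruct Hb as [? [? ?]]; subst; simpl in E; discriminate.
      * change (pass2 (b :: c :: rest'')) with (link b (pass2 (c :: rest''))) in E.
        destruct Hb as [? [? ?]]; subst. destruct (pass2 (c :: rest'')); simpl in E. discriminate.
        destruct (Rlt_dec r x); discriminate.
    + destruct (link_single a _ Ha S) as [S1 S2]. split. right; auto.
      rewrite S2, R2. simpl. lia.
Qed.

Lemma get_replace_size : forall p t s k l r, get t p = Node k l r ->
  (size (replace t p s) + S (size l + size r) = size t + size s)%nat.
Proof.
  induction p as [|b p IH]; intros t s k l r H.
  - destruct t; simpl in H; [discriminate|]. injection H; intros; subst. simpl. lia.
  - destruct t as [|c X Y]. destruct p; simpl in H; discriminate.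
    destruct b; simpl in *.
    + specialize (IH Y s k l r H). lia.
    + specialize (IH X s k l r H). lia.
Qed.

Lemma replace_node : forall p t k l r, get t p = Node k l r -> p <> [] ->
  exists c X Y, t = Node c X Y.
Proof.
  intros p t k l r H Hp. destruct p. congruence. destruct t. destruct p; simpl in H; discriminate.
  eauto.
Qed.

Definition Inv (s : bt * R) : Prop :=
  let (h, N) := s in
  rootok h /\ 0 < N /\ (size h = 0%nat -> 1/4 < N <= 1) /\
  ((1 <= size h)%nat -> N / 2 < INR (size h) < 2 * N).

Ltac dec_all := repeat match goal with |- context [Rle_dec ?a ?b] => destruct (Rle_dec a b) end.

Lemma updN_stable : forall n N, 0 < N -> N / 2 < INR n < 2 * N -> updN n N = N.
Proof.
  intros. unfold updN. destruct (Rle_dec (2 * N) (INR n)). lra.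
  destruct (Rle_dec (INR n) (N / 2)). lra. auto.
Qed.

Lemma dk_shape : forall h p k l r y, rootok h -> get h p = Node k l r ->
  rootok (fst (decrease_key h p y)) /\ size (fst (decrease_key h p y)) = size h.
Proof.
  intros h p k l r y Hok Hg. destruct p as [|b q].
  - simpl in Hg. destruct h as [|c X Y]; [discriminate|]. injection Hg; intros; subst.
    destruct Hok as [E|[? [? E]]]; [discriminate|]. injection E; intros; subst.
    simpl. split; auto. right. eexists; eexists; reflexivity.
  - destruct Hok as [E|[c [X E]]]; subst. destruct q; simpl in Hg; discriminate.
    destruct b.
    + exfalso. simpl in Hg. destruct q; simpl in Hg; discriminate.
    + unfold decrease_key. rewrite Hg. change (fst (?a, ?b)) with a. simpl in Hg.
      change (replace (Node c X Leaf) (false :: q) r) with (Node c (replace X q r) Leaf).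
      pose proof (get_replace_size q X r k l r Hg).
      destruct (link_single (Node c (replace X q r) Leaf) (Node y l Leaf)) as [S1 S2];
        try (eexists; eexists; reflexivity).
      split. right; auto. rewrite S2. simpl. lia.
Qed.

Lemma reachable_inv : forall s, reachable s -> Inv s.
Proof.
  intros s H. induction H as [|s s' Hr IH Hs].
  - simpl. repeat split; try lra; auto. left; auto. intros; simpl in *; lia.
  - destruct Hs as [h N x | h N Hne | h N Hne | h N p k l r y Hg Hy]; simpl in IH |- *;
      destruct IH as [Hok [HN [H0 H1]]].
    +
      assert (Hsz : rootok (insert h x) /\ size (insert h x) = S (size h)).
      { destruct Hok as [E|Hsg]. subst. simpl. split; auto. right; eexists; eexists; reflexivity.
        destruct Hsg as [c [X E]]; subst. unfold insert.
        destruct (link_single (Node c X Leaf) (Node x Leaf Leaf)) as [S1 S2];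
          try (eexists; eexists; reflexivity). split. right; auto. rewrite S2; simpl; lia. }
      destruct Hsz as [Hok' Hs']. rewrite Hs'. rewrite S_INR. unfold updN.
      destruct (Nat.eq_dec (size h) 0) as [E|E].
      * rewrite E in *. specialize (H0 eq_refl). simpl INR.
        dec_all; repeat split; auto; try lra; intros; lia.
      * assert (1 <= size h)%nat by lia. specialize (H1 H). pose proof (pos_INR (size h)).
        assert (1 <= INR (size h)) by (apply (le_INR 1); lia).
        dec_all; rewrite ?S_INR in *;
          repeat split; auto; try lra; intros; lia.
    +
      assert (1 <= size h)%nat by (destruct h; [congruence|simpl; lia]).
      specialize (H1 H). rewrite updN_stable by lra. repeat split; auto; try lra; intros; lia.
    +
      destruct Hok as [E|[c [X E]]]; [congruence|]. subst h.
      assert (Hsz : size (Node c X Leaf) = S (size X)) by (simpl; lia). rewrite Hsz in H0, H1.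
      simpl delete_min.
      destruct (spine_single X) as [Sp1 Sp2].
      destruct (pass1_single _ Sp1) as [Q1 Q2].
      destruct (pass2_single _ Q1) as [R1 R2].
      rewrite R2, Q2, Sp2.
      assert (1 <= S (size X))%nat by lia. specialize (H1 H). rewrite S_INR in H1.
      pose proof (pos_INR (size X)).
      unfold updN.
      destruct (Nat.eq_dec (size X) 0) as [E|E].
      * rewrite E in *. simpl INR in *.
        dec_all;
          repeat split; auto; try lra; intros; lia.
      * assert (1 <= INR (size X)). { apply (le_INR 1). lia. }
        dec_all;
          repeat split; auto; try lra; intros; lia.
    +
      destruct (dk_shape h p k l r y Hok Hg) as [D1 D2]. rewrite D2.
      assert (1 <= size h)%nat.
      { destruct h. destruct p; simpl in Hg; try discriminate; destruct p; discriminate. simpl; lia. }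
      specialize (H1 H). rewrite updN_stable by lra. repeat split; auto; try lra; intros; lia.
Qed.

Definition largeb (N : R) (t : bt) : bool :=
  match t with Leaf => false | Node _ a b => is_large N a b end.

Lemma edge_eq : forall N l r, edge_pot N l r = if is_large N l r && largeb N r then -7 else 0.
Proof. intros. destruct r; simpl. destruct (is_large N l Leaf); reflexivity. reflexivity. Qed.

Lemma is_large_iff : forall N l r, is_large N l r = true <-> lg N < INR (size l) /\ lg N < INR (size r).
Proof.
  intros. unfold is_large. destruct (Rlt_dec (lg N) (INR (size l))); destruct (Rlt_dec (lg N) (INR (size r)));
  split; intros; try discriminate; try tauto; auto.
Qed.

Lemma is_large_mono : forall N l r l' r', (size l' <= size l)%nat -> (size r' <= size r)%nat ->
  is_large N l' r' = true -> is_large N l r = true.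
Proof.
  intros N l r l' r' H1 H2 H. apply is_large_iff in H. apply is_large_iff.
  apply le_INR in H1. apply le_INR in H2. lra.
Qed.

Lemma is_large_false : forall N l r, is_large N l r = false ->
  INR (size l) <= lg N \/ INR (size r) <= lg N.
Proof.
  intros. destruct (Rle_dec (INR (size l)) (lg N)). auto. destruct (Rle_dec (INR (size r)) (lg N)). auto.
  assert (is_large N l r = true) by (apply is_large_iff; lra). congruence.
Qed.

Definition G (N : R) (m : nat) : R := 7 + 21 * Rmin (INR m) (lg N + 1).

Lemma G_ge7 : forall N m, -1 < lg N -> 7 <= G N m.
Proof.
  intros. unfold G. pose proof (pos_INR m). unfold Rmin. destruct (Rle_dec (INR m) (lg N + 1)); lra.
Qed.

Lemma G_mono : forall N m m', (m' <= m)%nat -> G N m' <= G N m.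
Proof.
  intros. unfold G. apply le_INR in H. pose proof (Rle_min_compat_r _ _ (lg N + 1) H). lra.
Qed.

Lemma G_jump : forall N m m', (m' < m)%nat -> INR m' <= lg N -> G N m' + 21 <= G N m.
Proof.
  intros. unfold G. rewrite Rmin_left by lra.
  assert (INR m' + 1 <= INR m).
  { rewrite <- S_INR. apply le_INR. lia. }
  assert (INR m' + 1 <= Rmin (INR m) (lg N + 1)) by (apply Rmin_glb; lra).
  lra.
Qed.

Lemma edge_ge : forall N l r, -7 <= edge_pot N l r.
Proof. intros. rewrite edge_eq. destruct (_ && _); lra. Qed.

Lemma edge_le : forall N l r, edge_pot N l r <= 0.
Proof. intros. rewrite edge_eq. destruct (_ && _); lra. Qed.

Lemma Dlem : forall N, -1 < lg N -> forall q T k l r, get T q = Node k l r ->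
  tree_pot N (replace T q r) + tree_pot N l - tree_pot N T +
  (if largeb N T && (match q with [] => true | _ => negb (largeb N (replace T q r)) end) then 7 else 0)
  <= G N (size (replace T q r)).
Proof.
  intros N HL. induction q as [|b q IH]; intros T k l r Hg.
  - destruct T as [|c X Y]; simpl in Hg; [discriminate|]. injection Hg; intros; subst. clear Hg.
    simpl. pose proof (G_ge7 N (size r) HL). pose proof (edge_ge N l r). pose proof (phi_nonneg N l r).
    destruct (is_large N l r) eqn:E; simpl.
    + pose proof (phi_large_ge N l r E). lra.
    + lra.
  - destruct T as [|c X Y]. destruct q; simpl in Hg; discriminate.
    destruct b.
    + simpl in Hg. specialize (IH Y k l r Hg).
      pose proof (get_replace_size q Y r k l r Hg) as Hs.
      change (replace (Node c X Y) (true :: q) r) with (Node c X (replace Y q r)).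
      set (Y' := replace Y q r) in *.
      change (size (Node c X Y')) with (S (size X + size Y')).
      cbn [tree_pot largeb negb andb].
      assert (Hm : (size Y' <= size Y)%nat) by lia.
      pose proof (phi_mono N X Y X Y' (le_n _) Hm).
      rewrite !edge_eq.
      assert (Hmono : is_large N X Y' = true -> is_large N X Y = true)
        by (apply is_large_mono; lia).
      assert (HJ : is_large N X Y = true -> is_large N X Y' = false -> INR (size Y') <= lg N).
      { intros H1 H2. apply is_large_iff in H1. destruct (is_large_false _ _ _ H2); lra. }
      pose proof (G_mono N (S (size X + size Y')) (size Y') ltac:(lia)).
      assert (Hjump : INR (size Y') <= lg N -> G N (size Y') + 21 <= G N (S (size X + size Y')))
        by (intros; apply G_jump; [lia|auto]).
      destruct (is_large N X Y) eqn:E1; destruct (is_large N X Y') eqn:E2;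
      destruct (largeb N Y) eqn:E3; destruct (largeb N Y') eqn:E4; destruct q;
      simpl in IH |- *;
      try (specialize (HJ eq_refl eq_refl); specialize (Hjump HJ));
      try (specialize (Hmono eq_refl); discriminate); lra.
    + simpl in Hg. specialize (IH X k l r Hg).
      pose proof (get_replace_size q X r k l r Hg) as Hs.
      change (replace (Node c X Y) (false :: q) r) with (Node c (replace X q r) Y).
      set (X' := replace X q r) in *.
      change (size (Node c X' Y)) with (S (size X' + size Y)).
      cbn [tree_pot largeb negb andb].
      assert (Hm : (size X' <= size X)%nat) by lia.
      pose proof (phi_mono N X Y X' Y Hm (le_n _)).
      rewrite !edge_eq.
      assert (Hmono : is_large N X' Y = true -> is_large N X Y = true)
        by (apply is_large_mono; lia).
      assert (HJ : is_large N X Y = true -> is_large N X' Y = false -> INR (size X') <= lg N).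
      { intros H1 H2. apply is_large_iff in H1. destruct (is_large_false _ _ _ H2); lra. }
      pose proof (G_mono N (S (size X' + size Y)) (size X') ltac:(lia)).
      assert (Hjump : INR (size X') <= lg N -> G N (size X') + 21 <= G N (S (size X' + size Y)))
        by (intros; apply G_jump; [lia|auto]).
      assert (Hjx : 0 <= (if largeb N X && match q with [] => true | _ => negb (largeb N X') end then 7 else 0))
        by (destruct (_ && _); lra).
      set (jx := if largeb N X && match q with [] => true | _ => negb (largeb N X') end then 7 else 0) in *.
      destruct (is_large N X Y) eqn:E1; destruct (is_large N X' Y) eqn:E2;
      destruct (largeb N Y) eqn:E3;
      simpl in IH |- *;
      try (specialize (HJ eq_refl eq_refl); specialize (Hjump HJ));
      try (specialize (Hmono eq_refl); discriminate); lra.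
Qed.

Lemma phi_bound_n : forall N x y n, (S (size x + size y) <= n)%nat ->
  phi N x y <= 400 + 100 * lg (INR n).
Proof.
  intros. pose proof (phi_upper N x y).
  assert (lg (INR (S (size x + size y))) <= lg (INR n)).
  { apply lg_le. pose proof (INR_S_ge1 (size x + size y)); lra. apply le_INR; auto. }
  lra.
Qed.

Theorem lemma4 :
  exists c : R,
    forall (h : bt) (N : R), reachable (h, N) ->
    forall (p : list bool) (k : R) (l r : bt) (y : R),
      get h p = Node k l r -> y < k ->
      dk_amortized h N p y <= c * (1 + lg (INR (size h))).
Proof.
  exists 1000. intros h N Hr p k l r y Hg Hy.
  pose proof (reachable_inv _ Hr) as [Hok [HN [H0 H1]]].
  assert (Hn1 : (1 <= size h)%nat).
  { destruct h. destruct p; simpl in Hg; try discriminate; destruct p; discriminate. simpl; lia. }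
  specialize (H1 Hn1).
  assert (Hn1R : 1 <= INR (size h)) by (apply (le_INR 1); auto).
  assert (Hlgn : 0 <= lg (INR (size h))) by (apply lg_nonneg; auto).
  assert (HL1 : -1 < lg N).
  { assert (lg (2 * (1/2)) = 1 + lg (1/2)) by (apply lg_2x; lra).
    replace (2 * (1/2)) with 1 in H by field. rewrite lg_1 in H.
    pose proof (lg_lt (1/2) N ltac:(lra) ltac:(lra)). lra. }
  assert (HL2 : lg N < 1 + lg (INR (size h))).
  { rewrite <- lg_2x by lra. apply lg_lt; lra. }
  destruct (dk_shape h p k l r y Hok Hg) as [_ Hsz].
  unfold dk_amortized. rewrite Hsz. rewrite (updN_stable _ _ HN H1).
  unfold Phi. rewrite Hsz.
  destruct p as [|b q].
  - destruct h as [|c X Y]; simpl in Hg; [discriminate|]. injection Hg; intros; subst.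
    unfold decrease_key; cbn [fst snd]. change (INR 1) with 1. change (tree_pot N (Node y l r)) with (tree_pot N (Node k l r)). lra.
  - destruct Hok as [E|[c [A0 E]]]; subst. simpl in Hn1; lia.
    destruct b. { exfalso. simpl in Hg. destruct q; simpl in Hg; discriminate. }
    simpl in Hg.
    pose proof (Dlem N HL1 q A0 k l r Hg) as HD.
    pose proof (get_replace_size q A0 r k l r Hg) as Hs.
    set (A := replace A0 q r) in *.
    assert (Hj : 0 <= (if largeb N A0 && match q with [] => true | _ => negb (largeb N A) end then 7 else 0))
      by (destruct (_ && _); lra).
    assert (HG : G N (size A) <= 7 + 21 * (lg N + 1)) by (unfold G; pose proof (Rmin_r (INR (size A)) (lg N + 1)); lra).
    pose proof (phi_nonneg N A0 Leaf).
    assert (Hn : size (Node c A0 Leaf) = S (size A0)) by (simpl; lia).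
    rewrite Hn in *.
    replace (decrease_key (Node c A0 Leaf) (false :: q) y) with (link (Node c A Leaf) (Node y l Leaf), 2%nat)
      by (unfold decrease_key; simpl; rewrite Hg; reflexivity).
    change (fst (?a, ?b)) with a. change (snd (?a, ?b)) with b.
    unfold link. change (tree_pot N (Node c A0 Leaf)) with
      (phi N A0 Leaf + edge_pot N A0 Leaf + tree_pot N A0 + tree_pot N Leaf).
    assert (EL : edge_pot N A0 Leaf = 0) by reflexivity.
    assert (TL : tree_pot N Leaf = 0) by reflexivity.
    rewrite EL, TL.
    destruct (Rlt_dec y c).
    + change (tree_pot N (Node y (Node c A l) Leaf)) with
        (phi N (Node c A l) Leaf + edge_pot N (Node c A l) Leaf +
         (phi N A l + edge_pot N A l + tree_pot N A + tree_pot N l) + tree_pot N Leaf).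
      rewrite TL. assert (edge_pot N (Node c A l) Leaf = 0) by reflexivity.
      pose proof (edge_le N A l).
      pose proof (phi_bound_n N (Node c A l) Leaf (S (size A0)) ltac:(simpl; lia)).
      pose proof (phi_bound_n N A l (S (size A0)) ltac:(lia)).
      simpl INR at 1. lra.
    + change (tree_pot N (Node c (Node y l A) Leaf)) with
        (phi N (Node y l A) Leaf + edge_pot N (Node y l A) Leaf +
         (phi N l A + edge_pot N l A + tree_pot N l + tree_pot N A) + tree_pot N Leaf).
      rewrite TL. assert (edge_pot N (Node y l A) Leaf = 0) by reflexivity.
      pose proof (edge_le N l A).
      pose proof (phi_bound_n N (Node y l A) Leaf (S (size A0)) ltac:(simpl; lia)).
      pose proof (phi_bound_n N l A (S (size A0)) ltac:(lia)).
      simpl INR at 1. lra.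
Qed.
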